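(* Let $2\le k<n$ be integers. For a probability vector $\lambda=(\lambda_1,\ldots,\lambda_n)$ define $\rho^P(\lambda)\in\mathbb{R}^n$ by $\rho^P(\lambda)_i=\frac1k\sum_{j=i}^{i+k-1}\lambda_j$, indices modulo $n$. Then every fiber of the map $\lambda\mapsto\rho^P(\lambda)$ (on probability vectors) that contains a pure state is a singleton; that is, if $e_m$ is a standard basis vector and $\mu$ is a probability vector with $\rho^P(\mu)=\rho^P(e_m)$, then $\mu=e_m$.
   Context: Probability vectors in $\mathbb{R}^n$ are identified with diagonal density matrices $\mathrm{diag}(\lambda_1,\dots,\lambda_n)$; the pure states among them are the standard basis vectors $e_m$ (i.e. $E_{mm}$). The map is the one induced by the POVM $(\tfrac1kQ_i)_{i=1}^n$, $Q_i$ the diagonal matrix with $1$ in positions $i,\ldots,i+k-1$ mod $n$. *)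

(* Defs.v *)
From HB Require Import structures.
From mathcomp Require Import all_boot all_order all_algebra.
From mathcomp Require Import reals.
Set Implicit Arguments. Unset Strict Implicit. Unset Printing Implicit Defensive.
Import Order.TTheory GRing.Theory Num.Theory.
Local Open Scope ring_scope.

Definition prob_vec (R : realType) (n : nat) (l : 'I_n -> R) : Prop :=
  (forall i, 0 <= l i) /\ \sum_(i < n) l i = 1.

Definition basis_vec (R : realType) (n : nat) (m : 'I_n) : 'I_n -> R :=
  fun i => if i == m then 1 else 0.

Lemma ord_pos (n : nat) (i : 'I_n) : (0 < n)%N.
Proof. by case: n i => [[]|]. Qed.

Definition cshift (n : nat) (i : 'I_n) (j : nat) : 'I_n :=
  Ordinal (ltn_pmod (i + j)%N (ord_pos i)).

Definition rhoP (R : realType) (n k : nat) (l : 'I_n -> R) : 'I_n -> R :=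
  fun i => k%:R^-1 * \sum_(j < k) l (cshift i j).

(* Main.v *)
Require Import Defs.
From HB Require Import structures.
From mathcomp Require Import all_boot all_order all_algebra.
From mathcomp Require Import reals.
From mathcomp Require Import zify ring lra.
From Stdlib Require Import FunctionalExtensionality.
Import Order.TTheory GRing.Theory Num.Theory.
Local Open Scope ring_scope.

Lemma mod_range (x n : nat) : (n <= x)%N -> (x < n + n)%N -> (x %% n = x - n)%N.
Proof.
move=> h1 h2; rewrite -{1}(subnK h1) modnDr modn_small //; lia.
Qed.

Lemma cshiftE (n : nat) (i : 'I_n) (j : nat) : val (cshift i j) = ((i + j) %% n)%N.
Proof. by []. Qed.

Theorem proposition5p3 (R : realType) (n k : nat) (hk2 : (2 <= k)%N)
  (hkn : (k < n)%N) (m : 'I_n) (mu : 'I_n -> R) :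
  prob_vec mu -> rhoP k mu = rhoP k (basis_vec R m) -> mu = basis_vec R m.
Proof.
move=> [mu0 mu1] hrho.
have hm := ltn_ord m.
have zero : forall j : 'I_n, j != m -> mu j = 0.
  move=> j hjm.
  have hj := ltn_ord j.
  have hne : nat_of_ord j <> nat_of_ord m by move=> e; move/eqP: hjm; apply; apply: val_inj.
  set d := (if (m <= j)%N then j - m else j + n - m)%N.
  have hd1 : (1 <= d)%N by rewrite /d; case: (leqP m j) => H; lia.
  have hd2 : (d < n)%N by rewrite /d; case: (leqP m j) => H; lia.
  have hdj : (m + d = j \/ m + d = j + n)%N by rewrite /d; case: (leqP m j) => H; lia.
  pose t := if (d - 1 < n - k)%N then (d - 1)%N else (n - k - 1)%N.
  pose jj := if (d - 1 < n - k)%N then 0%N else (d + k - n)%N.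
  have ht : (t < n - k)%N by rewrite /t; case: (ltnP (d - 1) (n - k)) => H; lia.
  have hjj : (jj < k)%N by rewrite /jj; case: (ltnP (d - 1) (n - k)) => H; lia.
  have htj : (t + jj = d - 1)%N by rewrite /t /jj; case: (ltnP (d - 1) (n - k)) => H; lia.
  pose i := cshift m (1 + t).
  have Hmod : forall j', (j' < k)%N -> nat_of_ord (cshift i j') = ((m + 1 + t + j') %% n)%N.
    move=> j' _; rewrite !cshiftE modnDml; congr (_ %% _)%N; lia.
  have Hz : rhoP k (basis_vec R m) i = 0.
    rewrite /rhoP big1 ?mulr0 // => j' _.
    rewrite /basis_vec; case: eqP => // e; exfalso.
    have := Hmod j' (ltn_ord j'); rewrite e.
    have hj' := ltn_ord j'.
    have [hlt|hge] := ltnP (m + 1 + t + j') n.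
      rewrite modn_small //; lia.
    rewrite mod_range //; lia.
  have Hs : \sum_(j' < k) mu (cshift i j') = 0.
    move: Hz; rewrite -hrho /rhoP => /eqP; rewrite mulf_eq0 invr_eq0 pnatr_eq0.
    have -> : (k == 0%N) = false by apply/negbTE; lia.
    by move/eqP.
  have := (@psumr_eq0P _ _ _ _ (fun (j' : 'I_k) _ => mu0 (cshift i j')) Hs (Ordinal hjj) isT).
  suff -> : cshift i (Ordinal hjj) = j by [].
  apply: val_inj; change (nat_of_ord (cshift i jj) = nat_of_ord j); rewrite (Hmod jj hjj).
  have e : (m + 1 + t + jj = m + d)%N by lia.
  rewrite e; case: hdj => ->; first by rewrite modn_small.
  by rewrite modnDr modn_small.
apply: functional_extensionality => j; rewrite /basis_vec.
case: eqP => [->|/eqP hjm]; last exact: zero.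
move: mu1; rewrite (bigD1 m) //= big1 ?addr0 //.
Qed.
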